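(* Let $\mathcal L$ be a self-adjoint operator on a Hilbert space $\mathcal H$ with an orthonormal basis of eigenfunctions $\mathcal Lf_k=\lambda_kf_k$, and assume that for some $0<\delta<\lambda$, $$\delta\ge\lambda_1,\dots,\lambda_{N+1}\ge-\delta>-\lambda\ge\lambda_{N+2}\ge\lambda_{N+3}\ge\dots .$$ For $u\in\mathcal H$ with $\langle f_{N+1},u\rangle\ne0$ define $u^\perp=\{f\in\mathcal H:\langle f,u\rangle=0\}$ and $$F_u=\frac{1}{\langle f_{N+1},u\rangle}\sum_{i=1}^N\langle f_i,u\rangle f_i+f_{N+1}.$$ Then (i) there exists an $N$-dimensional subspace $\mathcal U\subset u^\perp$ such that $|\langle\mathcal Lh,h\rangle|\le\delta\|h\|^2$ for all $h\in\mathcal U$; and (ii) if $|\cos\angle(F_u,u)|\ge\sqrt{\delta/\lambda}$, where $\cos\angle(F_u,u)=\frac{\langle F_u,u\rangle}{\|F_u\|\|u\|}$, then for every nonzero $h$ with $h\perp u,f_1,\dots,f_{N+1}$, $$\frac{\langle\mathcal Lh,h\rangle}{\|h\|^2}\le\frac{\delta-\lambda\cos^2\angle(F_u,u)}{\cos^2\angle(F_u,u)+1}.$$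
   Context: $N\ge1$ is an integer; the eigenvalues $\lambda_k$ are listed with the stated ordering; $\angle(F_u,u)$ denotes the angle between $F_u$ and $u$. *)

(* Defs.v *)
From HB Require Import structures.
From mathcomp Require Import all_boot all_order all_algebra.
From mathcomp Require Import reals.
Set Implicit Arguments. Unset Strict Implicit. Unset Printing Implicit Defensive.
Import Order.TTheory GRing.Theory Num.Theory.
Local Open Scope ring_scope.

Section Hilbert.
Variables (R : realType) (V : lmodType R) (inner : V -> V -> R).

Definition is_inner_product : Prop :=
  [/\ forall x y, inner x y = inner y x,
      forall a x y z, inner (a *: x + y) z = a * inner x z + inner y z,
      forall x, 0 <= inner x x
    & forall x, inner x x = 0 -> x = 0].

Definition inorm (x : V) : R := Num.sqrt (inner x x).

Definition complete_inner : Prop :=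
  forall s : nat -> V,
    (forall e : R, 0 < e -> exists M : nat, forall m n : nat,
        (M <= m)%N -> (M <= n)%N -> inorm (s m - s n) < e) ->
    exists x : V, forall e : R, 0 < e -> exists M : nat, forall n : nat,
        (M <= n)%N -> inorm (s n - x) < e.

(* f 0, f 1, f 2, ... is an orthonormal basis (paper: f_1, f_2, f_3, ...):
   orthonormal and every x is the norm-limit of its Fourier partial sums *)
Definition orthonormal_basis (f : nat -> V) : Prop :=
  (forall i j : nat, inner (f i) (f j) = if i == j then 1 else 0) /\
  (forall x : V, forall e : R, 0 < e -> exists M : nat, forall n : nat,
      (M <= n)%N -> inorm (x - \sum_(k < n) inner x (f k) *: f k) < e).

Definition dense_set (D : V -> Prop) : Prop :=
  forall x : V, forall e : R, 0 < e -> exists d, D d /\ inorm (x - d) < e.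

(* (possibly unbounded) self-adjoint operator L with domain D:
   D is a dense linear subspace, L is linear on D, L is symmetric on D,
   and the domain of the adjoint is contained in D (so L = L^* ). *)
Definition self_adjoint (D : V -> Prop) (L : V -> V) : Prop :=
  [/\ forall a x y, D x -> D y -> D (a *: x + y) /\ L (a *: x + y) = a *: L x + L y,
      dense_set D,
      forall x y, D x -> D y -> inner (L x) y = inner x (L y)
    & forall y z, (forall x, D x -> inner (L x) y = inner x z) -> D y].

Definition cos_angle (x y : V) : R := inner x y / (inorm x * inorm y).

(* F_u (paper indices: f_1..f_N are f 0 .. f (N-1); f_{N+1} is f N) *)
Definition F_u (f : nat -> V) (N : nat) (u : V) : V :=
  (inner (f N) u)^-1 *: (\sum_(i < N) inner (f i) u *: f i) + f N.

End Hilbert.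

(* Main.v *)
Require Import Defs.
From HB Require Import structures.
From mathcomp Require Import all_boot all_order all_algebra.
From mathcomp Require Import reals.
From mathcomp Require Import ring lra.
Import Order.TTheory GRing.Theory Num.Theory.
Local Open Scope ring_scope.
Set Implicit Arguments. Unset Strict Implicit.

Section H.

Variables (R : realType) (V : lmodType R) (inner : V -> V -> R).
Hypothesis Hip : is_inner_product inner.

Lemma inner_sym x y : inner x y = inner y x. Proof. by case: Hip. Qed.
Lemma innerDZ a x y z : inner (a *: x + y) z = a * inner x z + inner y z.
Proof. by case: Hip. Qed.
Lemma inner0l z : inner 0 z = 0.
Proof. by have := innerDZ (-1) 0 0 z; rewrite scaler0 addr0 mulN1r addNr. Qed.
Lemma innerDl x y z : inner (x + y) z = inner x z + inner y z.
Proof. by have := innerDZ 1 x y z; rewrite scale1r mul1r. Qed.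
Lemma innerZl a x z : inner (a *: x) z = a * inner x z.
Proof. by have := innerDZ a x 0 z; rewrite addr0 inner0l addr0. Qed.
Lemma innerNl x z : inner (- x) z = - inner x z.
Proof. by rewrite -scaleN1r innerZl mulN1r. Qed.
Lemma innerBl x y z : inner (x - y) z = inner x z - inner y z.
Proof. by rewrite innerDl innerNl. Qed.
Lemma innerDr x y z : inner z (x + y) = inner z x + inner z y.
Proof. by rewrite !(inner_sym z) innerDl. Qed.
Lemma innerZr a x z : inner z (a *: x) = a * inner z x.
Proof. by rewrite !(inner_sym z) innerZl. Qed.
Lemma innerBr x y z : inner z (x - y) = inner z x - inner z y.
Proof. by rewrite !(inner_sym z) innerBl. Qed.
Lemma inner0r z : inner z 0 = 0.
Proof. by rewrite inner_sym inner0l. Qed.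
Lemma innerSuml n (F : 'I_n -> V) z :
  inner (\sum_(i < n) F i) z = \sum_(i < n) inner (F i) z.
Proof. exact: (big_morph (fun x => inner x z) (fun x y => innerDl x y z) (inner0l z)). Qed.
Lemma innerSumr n (F : 'I_n -> V) z :
  inner z (\sum_(i < n) F i) = \sum_(i < n) inner z (F i).
Proof. rewrite inner_sym innerSuml; apply: eq_bigr => i _; exact: inner_sym. Qed.

Variable f : nat -> V.
Hypothesis Hon : forall i j : nat, inner (f i) (f j) = if i == j then 1 else 0.

Lemma inner_f_sum n (y : nat -> R) k : (k < n)%N ->
  inner (f k) (\sum_(j < n) y j *: f j) = y k.
Proof.
move=> kn; rewrite innerSumr.
transitivity (\sum_(j < n | j == k :> nat) y j).
  rewrite [RHS]big_mkcond /=; apply: eq_bigr => j _.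
  rewrite innerZr Hon eq_sym; case: eqP => _; [by rewrite mulr1| by rewrite mulr0].
by rewrite big_ord1_eq kn.
Qed.

Lemma inner_sums n (x y : nat -> R) :
  inner (\sum_(k < n) x k *: f k) (\sum_(k < n) y k *: f k) = \sum_(k < n) x k * y k.
Proof.
rewrite innerSuml; apply: eq_bigr => k _.
by rewrite innerZl inner_f_sum.
Qed.

Variables (D : V -> Prop) (L : V -> V) (lam : nat -> R).
Hypothesis HL : forall a x y, D x -> D y -> D (a *: x + y) /\ L (a *: x + y) = a *: L x + L y.
Hypothesis Hf : forall k : nat, D (f k) /\ L (f k) = lam k *: f k.

Lemma D0 : D 0.
Proof.
have [H0 _] := Hf 0; have [] := HL (-1) H0 H0.
by rewrite scaleN1r addNr.
Qed.

Lemma L_sum n (e : nat -> R) :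
  D (\sum_(k < n) e k *: f k) /\
  L (\sum_(k < n) e k *: f k) = \sum_(k < n) (e k * lam k) *: f k.
Proof.
elim: n => [|n [IH1 IH2]].
  rewrite !big_ord0; split; first exact: D0.
  have [H0 _] := Hf 0; have [_] := HL (-1) H0 H0.
  by rewrite scaleN1r addNr scaleN1r addNr.
rewrite !big_ord_recr /= addrC [X in _ /\ _ = X]addrC.
have [Hfn HLn] := Hf n.
have [HD HLe] := HL (e n) Hfn IH1; split => //; rewrite HLe.
by rewrite HLn IH2 scalerA.
Qed.


Lemma lam_mono N : (forall k : nat, (N.+1 <= k)%N -> lam k.+1 <= lam k) ->
  forall k, (N.+1 <= k)%N -> lam k <= lam N.+1.
Proof.
move=> Hm; elim=> [//|k IH]; rewrite leq_eqVlt => /orP [/eqP <- //|Hk].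
exact: le_trans (Hm _ Hk) (IH Hk).
Qed.

Hypothesis Hsym : forall x y, D x -> D y -> inner (L x) y = inner x (L y).
Hypothesis Hbas : forall x : V, forall e : R, 0 < e -> exists M : nat, forall n : nat,
      (M <= n)%N -> inorm inner (x - \sum_(k < n) inner x (f k) *: f k) < e.

Lemma neg_part N (Lam : R) h : D h ->
  (forall k, (N < k)%N -> lam k <= - Lam) ->
  (forall i : nat, (i <= N)%N -> inner h (f i) = 0) ->
  inner (L h) h <= - Lam * inner h h.
Proof.
move=> Dh Hlam Horth.
set w := L h + Lam *: h.
have key : forall n, inner w (\sum_(k < n) inner h (f k) *: f k) <= 0.
  move=> n; rewrite innerSumr; apply: sumr_le0 => k _.
  rewrite innerZr /w innerDl innerZl Hsym //; last by case: (Hf k).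
  have [_ ->] := Hf k; rewrite innerZr.
  case: (leqP k N) => Hk; first by rewrite Horth // mul0r.
  have := Hlam _ Hk; set a := inner h (f k); nra.
have ww0 : 0 <= inner w w by case: Hip.
have dd0 : forall d, 0 <= inner d d by case: Hip.
have : inner w h <= 0.
  rewrite leNgt; apply/negP => xpos.
  set x := inner w h in xpos; set K := inner w w + 1.
  have Kpos : 0 < K by rewrite /K; nra.
  set t := x / K.
  have tpos : 0 < t by rewrite /t divr_gt0.
  have tK : t * K = x by rewrite /t divfK // gt_eqF.
  have [M HM] := Hbas h tpos.
  have := HM M (leqnn M).
  set s := \sum_(k < M) _ => Hd.
  have [d dE] : exists d, d = h - s by eexists.
  rewrite -dE in Hd.
  have hsd : h = s + d by rewrite dE addrC subrK.
  have B : x <= inner w d.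
    by rewrite /x {1}hsd innerDr; have := key M; rewrite -/s; lra.
  have C : inner d d < t ^+ 2.
    move: Hd; rewrite /inorm -[X in X < _ ^+ 2](sqr_sqrtr (dd0 d)).
    have := sqrtr_ge0 (inner d d); move: (Num.sqrt (inner d d)) => q; nra.
  have A : 0 <= inner (t *: w - d) (t *: w - d) by case: Hip.
  move: A; rewrite !innerBl !innerBr !innerZl !innerZr => A. rewrite (inner_sym d w) in A.
  have tB := ler_wpM2l (ltW tpos) B.
  rewrite /K in tK.
  have tK2 : t * (t * inner w w) + t ^+ 2 = t * x by rewrite -tK; ring.
  have tx := mulr_gt0 tpos xpos.
  lra.
rewrite /w innerDl innerZl; lra.
Qed.

End H.

Theorem theorem4p3 (R : realType) (V : lmodType R) (inner : V -> V -> R)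
  (D : V -> Prop) (L : V -> V) (f : nat -> V) (lam : nat -> R)
  (N : nat) (delta Lam : R) :
  is_inner_product inner ->
  complete_inner inner ->
  orthonormal_basis inner f ->
  self_adjoint inner D L ->
  (forall k : nat, D (f k) /\ L (f k) = lam k *: f k) ->
  0 < delta -> delta < Lam ->
  (forall k : nat, (k <= N)%N -> - delta <= lam k <= delta) ->
  lam N.+1 <= - Lam ->
  (forall k : nat, (N.+1 <= k)%N -> lam k.+1 <= lam k) ->
  forall u : V, inner (f N) u != 0 ->
  (* (i) an N-dimensional subspace U = span(b) of u^perp *)
  (exists b : 'I_N -> V,
      (forall c : 'I_N -> R, \sum_(i < N) c i *: b i = 0 -> forall i, c i = 0) /\
      (forall i, inner (b i) u = 0) /\
      (forall c : 'I_N -> R,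
         let h := \sum_(i < N) c i *: b i in
         D h /\ `|inner (L h) h| <= delta * inorm inner h ^+ 2)) /\
  (* (ii) *)
  (let c := cos_angle inner (F_u inner f N u) u in
   `|c| >= Num.sqrt (delta / Lam) ->
   forall h : V, h != 0 -> D h -> inner h u = 0 ->
     (forall i : nat, (i <= N)%N -> inner h (f i) = 0) ->
     inner (L h) h / inorm inner h ^+ 2 <= (delta - Lam * c ^+ 2) / (c ^+ 2 + 1)).
Proof.
move=> Hip _ [Hon Hbas] [HL _ Hsym _] Hf dpos dL Hlo HN1 Hmono u Hu.
have ihh h : inorm inner h ^+ 2 = inner h h.
  by rewrite /inorm sqr_sqrtr //; case: Hip.
split.
- set g := inner (f N) u.
  exists (fun i : 'I_N => f i - (inner (f i) u / g) *: f N).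
  split; [|split].
  + move=> c Hc j.
    have := congr1 (fun v => inner v (f j)) Hc.
    rewrite /= (inner0l Hip) (innerSuml Hip) (bigD1 j) //= big1 => [|i Hij].
      have hNj : (N == j) = false by rewrite eq_sym ltn_eqF.
      by rewrite (innerZl Hip) (innerBl Hip) (innerZl Hip) !Hon eqxx hNj mulr0 subr0 mulr1 addr0.
    have hij : (nat_of_ord i == nat_of_ord j) = false by apply/negbTE.
    have hNj : (N == j) = false by rewrite eq_sym ltn_eqF.
    by rewrite (innerZl Hip) (innerBl Hip) (innerZl Hip) !Hon hij hNj mulr0 subr0 mulr0.
  + move=> i; rewrite (innerBl Hip) (innerZl Hip) -/g divfK ?subrr //.
  + move=> c h.
    set m := - \sum_(i < N) c i * (inner (f i) u / g).
    pose e k := if @insub _ _ 'I_N k is Some i then c i else m.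
    have hE : h = \sum_(k < N.+1) e k *: f k.
      rewrite big_ord_recr /= /e insubF ?ltnn //.
      rewrite /h (eq_bigr (fun i : 'I_N => c i *: f i - (c i * (inner (f i) u / g)) *: f N)); last first.
        by move=> i _; rewrite scalerBr scalerA.
      rewrite sumrB -scaler_suml /m scaleNr.
      congr (_ - _); apply: eq_bigr => i _; by rewrite valK.
    have [HD HLh] := L_sum HL Hf N.+1 e.
    rewrite -hE in HD HLh; split => //.
    rewrite ihh HLh hE (inner_sums Hip Hon N.+1 (fun k => e k * lam k) e) (inner_sums Hip Hon N.+1 e e).
    apply: le_trans (ler_norm_sum _ _ _) _.
    rewrite mulr_sumr; apply: ler_sum => k _.
    have /andP [l1 l2] := Hlo k (ltn_ord k).
    have -> : e k * lam k * e k = lam k * e k ^+ 2 by ring.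
    rewrite normrM (ger0_norm (sqr_ge0 (e k))) expr2.
    have : `|lam k| <= delta by rewrite ler_norml l1 l2.
    have := sqr_ge0 (e k); rewrite expr2; nra.
- move=> c _ h hne Dh _ Horth.
  have Hlam : forall k, (N < k)%N -> lam k <= - Lam.
    by move=> k Hk; exact: le_trans (lam_mono Hmono Hk) HN1.
  have Hneg := neg_part Hip Hf Hsym Hbas Dh Hlam Horth.
  have hpos : 0 < inner h h.
    rewrite lt_def; case: Hip => _ _ -> H0; rewrite andbT.
    by apply/eqP => /H0 /eqP; rewrite (negbTE hne).
  have c2 : 0 < c ^+ 2 + 1 by have := sqr_ge0 c; lra.
  rewrite ihh ler_pdivrMr //.
  apply: le_trans Hneg _; apply: ler_wpM2r; first exact: ltW.
  rewrite ler_pdivlMr //; lra.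
Qed.
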